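(* Let $H$ be a real symmetric positive definite $d\times d$ matrix and $L$ a real $d\times d$ matrix with $L^TH+HL=0$. Consider an $s$-stage explicit Runge–Kutta method applied to $\frac{d}{dt}u=Lu$, $u_{n+1}=G_s u_n$ with $G_s=\sum_{k=0}^s a_k(hL)^k$, $a_0=1$, $a_s\ne0$, $h>0$. Suppose (i) $b_k=0$ for $1\le k\le s-2$, (ii) $b_{s-1}<0$, and (iii) $h\|L\|\le\sqrt{-b_{s-1}/b_s}$. Then the method is strongly stable, i.e. $\|u_{n+1}\|_H\le\|u_n\|_H$ for every $u_n$.
   Context: For $0\le k\le s$, $b_k=\sum_{i=\max(0,2k-s)}^{\min(2k,s)}(-1)^{k+i}a_i a_{2k-i}$ (in particular $b_s=a_s^2$). Here $\|x\|_H=\sqrt{\langle x,Hx\rangle}$ and $\|L\|=\sup_{\|v\|_H=1}\|Lv\|_H$. *)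

(* Defs.v *)
From HB Require Import structures.
From mathcomp Require Import all_boot all_order all_algebra.
From mathcomp Require Import classical_sets reals.
Set Implicit Arguments. Unset Strict Implicit. Unset Printing Implicit Defensive.
Import Order.TTheory GRing.Theory Num.Theory.
Local Open Scope ring_scope.
Local Open Scope classical_set_scope.

Definition mxpow {R : realType} {d : nat} (A : 'M[R]_d) (k : nat) : 'M[R]_d :=
  iter k (mulmx A) 1%:M.

Definition spd {R : realType} {d : nat} (H : 'M[R]_d) : Prop :=
  H^T = H /\ forall x : 'cV[R]_d, x != 0 -> 0 < (x^T *m H *m x) 0 0.

Definition Hnorm {R : realType} {d : nat} (H : 'M[R]_d) (x : 'cV[R]_d) : R :=
  Num.sqrt ((x^T *m H *m x) 0 0).

Definition Hopnorm {R : realType} {d : nat} (H L : 'M[R]_d) : R :=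
  sup [set Hnorm H (L *m v) | v in [set v : 'cV[R]_d | Hnorm H v = 1]].

Definition RKop {R : realType} {d : nat} (a : nat -> R) (s : nat) (h : R)
  (L : 'M[R]_d) : 'M[R]_d :=
  \sum_(k < s.+1) a k *: mxpow (h *: L) k.

Definition bcoef {R : realType} (a : nat -> R) (s k : nat) : R :=
  \sum_(maxn 0 (2 * k - s) <= i < (minn (2 * k) s).+1)
     (-1) ^+ (k + i) * a i * a (2 * k - i)%N.

(* Main.v *)
Require Import Defs.
From HB Require Import structures.
From mathcomp Require Import all_boot all_order all_algebra.
From mathcomp Require Import classical_sets reals.
From mathcomp Require Import zify ring lra.
Import Order.TTheory GRing.Theory Num.Theory.
Local Open Scope ring_scope.

Definition Bf {R : realType} {d : nat} (H : 'M[R]_d) (x y : 'cV[R]_d) : R :=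
  (x^T *m H *m y) 0 0.

Lemma BfDl {R : realType} {d : nat} (H : 'M[R]_d) x y z :
  Bf H (x + y) z = Bf H x z + Bf H y z.
Proof. by rewrite /Bf linearD /= !mulmxDl mxE. Qed.

Lemma BfDr {R : realType} {d : nat} (H : 'M[R]_d) x y z :
  Bf H z (x + y) = Bf H z x + Bf H z y.
Proof. by rewrite /Bf !mulmxDr mxE. Qed.

Lemma BfZl {R : realType} {d : nat} (H : 'M[R]_d) c x z :
  Bf H (c *: x) z = c * Bf H x z.
Proof. by rewrite /Bf linearZ /= -!scalemxAl mxE. Qed.

Lemma BfZr {R : realType} {d : nat} (H : 'M[R]_d) c x z :
  Bf H z (c *: x) = c * Bf H z x.
Proof. by rewrite /Bf -!scalemxAr mxE. Qed.

Lemma BfC {R : realType} {d : nat} (H : 'M[R]_d) x y :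
  H^T = H -> Bf H x y = Bf H y x.
Proof.
move=> HT; rewrite /Bf.
have -> : (x^T *m H *m y) 0 0 = (x^T *m H *m y)^T 0 0 by rewrite [RHS]mxE.

by rewrite !trmx_mul trmxK HT mulmxA.
Qed.

Lemma mxpowE {R : realType} {n : nat} (A : 'M[R]_n.+1) k : mxpow A k = A ^+ k.
Proof.
elim: k => [|k IH] /=; first by rewrite expr0.
by rewrite /mxpow /= -/(mxpow A k) IH exprS mulmxE.
Qed.

Lemma skewpow {R : realType} {n : nat} (H M : 'M[R]_n.+1) :
  M^T *m H = - (H *m M) ->
  forall k, (M ^+ k)^T *m H = (-1) ^+ k *: (H *m M ^+ k).
Proof.
move=> sk; elim=> [|k IH]; first by rewrite !expr0 trmx1 mul1mx mulmx1 scale1r.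
rewrite exprSr -mulmxE trmx_mul -mulmxA IH -scalemxAr mulmxA.
rewrite [M^T *m (H *m _)]mulmxA sk mulNmx exprS scalerN -scaleN1r scalerA.
congr (_ *: _); rewrite -!mulmxA; congr (H *m _).
by rewrite !mulmxE -exprS -exprSr.
Qed.

Lemma Bfpow {R : realType} {n : nat} (H M : 'M[R]_n.+1) (u : 'cV[R]_n.+1) :
  M^T *m H = - (H *m M) ->
  forall i j, Bf H (M ^+ i *m u) (M ^+ j *m u) = (-1) ^+ i * Bf H u (M ^+ (i + j) *m u).
Proof.
move=> sk i j; rewrite /Bf trmx_mul -!mulmxA.
rewrite [(M ^+ i)^T *m _]mulmxA skewpow // -scalemxAl -scalemxAr mxE.
by rewrite exprD -mulmxE -!mulmxA.
Qed.

Lemma sign2 {R : realType} k : (-1) ^+ k * (-1) ^+ k = 1 :> R.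
Proof. by rewrite -exprD addnn -mul2n exprM sqrrN expr1n expr1n. Qed.

Lemma Bf_odd {R : realType} {n : nat} (H M : 'M[R]_n.+1) (u : 'cV[R]_n.+1) :
  H^T = H -> M^T *m H = - (H *m M) ->
  forall k, Bf H u (M ^+ (2 * k).+1 *m u) = 0.
Proof.
move=> HT sk k.
have h1 := Bfpow H M u sk k k.+1.
have h2 := Bfpow H M u sk k.+1 k.
have E1 : (k + k.+1 = (2 * k).+1)%N by lia.
have E2 : (k.+1 + k = (2 * k).+1)%N by lia.
rewrite E1 in h1; rewrite E2 BfC // h1 [(-1) ^+ k.+1]exprS in h2.
move: h2; set c := Bf H u _ => h2.
have e : (-1) ^+ k * c = 0 by lra.
by move: e => /eqP; rewrite mulf_eq0 signr_eq0 => /eqP.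
Qed.

Lemma Bf_even {R : realType} {n : nat} (H M : 'M[R]_n.+1) (u : 'cV[R]_n.+1) :
  M^T *m H = - (H *m M) ->
  forall k, Bf H u (M ^+ (2 * k) *m u) = (-1) ^+ k * Bf H (M ^+ k *m u) (M ^+ k *m u).
Proof.
move=> sk k; rewrite Bfpow // mulrA sign2 mul1r addnn -mul2n //.
Qed.

Lemma hornerZX {R : realType} {n : nat} (M : 'M[R]_n.+1) (c : R) i :
  horner_mx M (c *: 'X^i) = c *: M ^+ i.
Proof.
by rewrite -mul_polyC rmorphM /= horner_mx_C rmorphXn /= horner_mx_X -mulmxE mul_scalar_mx.
Qed.

Lemma RKop_horner {R : realType} {n : nat} (a : nat -> R) s h (L : 'M[R]_n.+1) :
  RKop a s h L = horner_mx (h *: L) (\poly_(i < s.+1) a i).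
Proof.
rewrite /RKop poly_def rmorph_sum; apply: eq_bigr => i _.
by rewrite mxpowE -hornerZX.
Qed.

Lemma horner_tr {R : realType} {n : nat} (H M : 'M[R]_n.+1) (a : nat -> R) s :
  M^T *m H = - (H *m M) ->
  (horner_mx M (\poly_(i < s.+1) a i))^T *m H =
  H *m horner_mx M (\poly_(i < s.+1) ((-1) ^+ i * a i)).
Proof.
move=> sk; rewrite !poly_def !rmorph_sum raddf_sum mulmx_suml mulmx_sumr.
apply: eq_bigr => i _; rewrite /=.
rewrite !hornerZX linearZ /=.
by rewrite -scalemxAl skewpow // scalerA mulrC -scalemxAr.
Qed.

Lemma Bf_sumr {R : realType} {d : nat} (H : 'M[R]_d) x m (F : 'I_m -> 'cV[R]_d) :
  Bf H x (\sum_(i < m) F i) = \sum_(i < m) Bf H x (F i).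
Proof. by rewrite /Bf mulmx_sumr summxE. Qed.

Lemma sum_even {R : realType} (f : nat -> R) s :
  (forall k, f (2 * k).+1 = 0) ->
  \sum_(m < (2 * s).+1) f m = \sum_(k < s.+1) f (2 * k)%N.
Proof.
move=> fo; elim: s => [|s IH]; first by rewrite !big_ord1.
have -> : ((2 * s.+1).+1 = ((2 * s).+1).+2)%N by lia.
rewrite big_ord_recr /= [in LHS]big_ord_recr /= IH fo addr0 [RHS]big_ord_recr /=.
by have -> : (2 * s.+1 = (2 * s).+2)%N by lia.
Qed.

Lemma big_nat0 {R : realType} m n (F : nat -> R) :
  (forall i, (m <= i < n)%N -> F i = 0) -> \sum_(m <= i < n) F i = 0.
Proof. by move=> HF; rewrite big_nat_cond big1 // => i /andP[] /HF. Qed.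

Lemma coef_bcoef {R : realType} (a : nat -> R) s k : (k <= s)%N ->
  (-1) ^+ k * ((\poly_(i < s.+1) ((-1) ^+ i * a i)) * \poly_(i < s.+1) a i)`_(2 * k)
  = bcoef a s k.
Proof.
move=> ks; rewrite coefM mulr_sumr /bcoef max0n.
pose F := fun i : nat => (-1) ^+ k * ((\poly_(i0 < s.+1) ((-1) ^+ i0 * a i0))`_i *
      (\poly_(i0 < s.+1) a i0)`_(2 * k - i)).
rewrite (eq_bigr (fun i : 'I_(2 * k).+1 => F i)) // -(big_mkord xpredT F) /F.
rewrite (@big_cat_nat _ _ _ (2 * k - s)) //=; last by lia.
rewrite (@big_cat_nat _ _ _ (minn (2 * k) s).+1 (2 * k - s)) //=; try lia.
rewrite big_nat0 ?add0r; last first.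
  move=> i /andP[_ Hi]; rewrite !coef_poly.
  have -> : ((2 * k - i) < s.+1)%N = false by lia.
  by rewrite !mulr0.
rewrite [X in _ + X]big_nat0 ?addr0; last first.
  move=> i /andP[Hi Hi2]; rewrite !coef_poly.
  have -> : (i < s.+1)%N = false.
    by move: Hi; rewrite /minn; case: ifP => ? ?; lia.
  by rewrite !mul0r mulr0.
rewrite big_nat_cond [RHS]big_nat_cond; apply: eq_bigr => i /andP[/andP[H1 H2] _].
rewrite !coef_poly.
have -> : (i < s.+1)%N by lia.
have -> : ((2 * k - i) < s.+1)%N by lia.
by rewrite exprD !mulrA.
Qed.


Lemma poly_trunc {R : realType} (r : {poly R}) N : (size r <= N)%N ->
  r = \poly_(m < N) r`_m.
Proof.
move=> hs; apply/polyP => j; rewrite coef_poly; case: ltnP => // hj.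
by rewrite nth_default // (leq_trans hs hj).
Qed.

Lemma main_identity {R : realType} {n : nat} (H L : 'M[R]_n.+1) (a : nat -> R) s h
  (u : 'cV[R]_n.+1) :
  H^T = H -> (h *: L)^T *m H = - (H *m (h *: L)) ->
  Bf H (RKop a s h L *m u) (RKop a s h L *m u) =
  \sum_(k < s.+1) bcoef a s k * Bf H ((h *: L) ^+ k *m u) ((h *: L) ^+ k *m u).
Proof.
move=> HT sk; set M := h *: L.
set p := \poly_(i < s.+1) a i.
set pm := \poly_(i < s.+1) ((-1) ^+ i * a i).
have -> : Bf H (RKop a s h L *m u) (RKop a s h L *m u) =
    Bf H u (horner_mx M (pm * p) *m u).
  rewrite /Bf RKop_horner -/M -/p trmx_mul -!mulmxA.
  have E := horner_tr H M a s sk.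
  rewrite [_^T *m (H *m _)]mulmxA E rmorphM /= -mulmxE !mulmxA.
  done.
have hs : (size (pm * p)%R <= (2 * s).+1)%N.
  apply: (leq_trans (size_polyMleq _ _)).
  have := size_poly s.+1 (fun i => (-1) ^+ i * a i).
  have := size_poly s.+1 a. rewrite -/p -/pm => h1 h2. move: (size pm) (size p) h1 h2 => x y h1 h2; lia.
rewrite (poly_trunc _ _ hs) poly_def rmorph_sum mulmx_suml Bf_sumr.
under eq_bigr => m _ do rewrite /= hornerZX -scalemxAl BfZr.
rewrite (sum_even (fun m => (pm * p)`_m * Bf H u (M ^+ m *m u))); last first.
  by move=> k /=; rewrite Bf_odd // mulr0.
apply: eq_bigr => k _; rewrite Bf_even // mulrA -coef_bcoef //.
by rewrite [(-1) ^+ k * _]mulrC.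
by rewrite -ltnS.
Qed.

Lemma Bf0l {R : realType} {d : nat} (H : 'M[R]_d) v : Bf H 0 v = 0.
Proof. by rewrite /Bf trmx0 !mul0mx mxE. Qed.

Lemma Qge0 {R : realType} {d : nat} (H : 'M[R]_d) x : spd H -> 0 <= Bf H x x.
Proof.
move=> [_ pos]; have [->|nz] := eqVneq x 0; first by rewrite Bf0l.
exact/ltW/pos.
Qed.

Lemma CS {R : realType} {d : nat} (H : 'M[R]_d) e v : spd H ->
  Bf H e v ^+ 2 <= Bf H e e * Bf H v v.
Proof.
move=> sH; have [->|nz] := eqVneq e 0; first by rewrite !Bf0l expr0n /= mul0r.
have Apos : 0 < Bf H e e by case: sH => _ /(_ e nz).
set A := Bf H e e; set b := Bf H e v; set c := Bf H v v.
set t := b / A.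
have tA : t * A = b by rewrite /t mulfVK // gt_eqF.
have := Qge0 H (v + (- t) *: e) sH.
rewrite !BfDl !BfDr !BfZl !BfZr -/A -/c (BfC _ v e) -/b; last by case: sH.
move=> h0.
have h1 : t * b <= c by nra.
have h2 : A * (t * b) <= A * c by rewrite ler_wpM2l // ltW.
by rewrite mulrA [A * t]mulrC tA -expr2 in h2.
Qed.

Lemma term_bound {R : realType} (x n y A B C : R) :
  x ^+ 2 <= A * C -> y ^+ 2 <= B * C ->
  x * n * y <= `|n| * ((A + B) / 2) * C.
Proof.
move=> hx hy.
have e1 : x * n * y <= `|n| * (`|x| * `|y|).
  rewrite (le_trans (ler_norm _)) // !normrM le_eqVlt; apply/orP; left; apply/eqP; ring.
have e2 : `|x| * `|y| <= (x ^+ 2 + y ^+ 2) / 2.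
  have := sqr_ge0 (`|x| - `|y|); rewrite -[x ^+ 2]real_normK ?num_real //.
  rewrite -[y ^+ 2]real_normK ?num_real //. move=> hh. nra.
have hn := normr_ge0 n.
have e3 : `|n| * (`|x| * `|y|) <= `|n| * ((x ^+ 2 + y ^+ 2) / 2) by apply: ler_wpM2l.
apply: (le_trans e1); apply: (le_trans e3).
have : (x ^+ 2 + y ^+ 2) / 2 <= (A + B) / 2 * C by lra.
move=> e4; rewrite -mulrA; exact: ler_wpM2l.
Qed.

Lemma spd_unit {R : realType} {n : nat} (H : 'M[R]_n.+1) : spd H -> H \in unitmx.
Proof.
move=> [HT pos]; rewrite unitmxE unitfE; apply/negP => /det0P [v nz vH].
have : v^T != 0 by rewrite -(inj_eq (@trmx_inj _ _ _)) trmx0 trmxK.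
by move=> /pos; rewrite trmxK vH mul0mx mxE ltxx.
Qed.

Lemma coordE {R : realType} {n : nat} (H : 'M[R]_n.+1) v i :
  (H *m v) i 0 = Bf H (delta_mx i 0) v.
Proof.
rewrite /Bf trmx_delta -mulmxA (mxE _ _ 0 0) (bigD1 i) //= big1 ?addr0.
  by rewrite [delta_mx _ _ _ _]mxE !eqxx mul1r.
by move=> j ji; rewrite [delta_mx _ _ _ _]mxE eqxx (negbTE ji) mul0r.
Qed.

Lemma op_bound {R : realType} {n : nat} (H L : 'M[R]_n.+1) : spd H ->
  exists K, forall v, Bf H (L *m v) (L *m v) <= K * Bf H v v.
Proof.
move=> sH; have Hu := spd_unit H sH.
set N := (L *m invmx H)^T *m H *m (L *m invmx H).
set e := fun i : 'I_n.+1 => Bf H (delta_mx i 0) (delta_mx i 0).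
exists (\sum_j \sum_i `|N i j| * ((e i + e j) / 2)) => v.
set w := H *m v.
have -> : L *m v = (L *m invmx H) *m w by rewrite /w -mulmxA mulKmx.
have -> : Bf H (L *m invmx H *m w) (L *m invmx H *m w) = (w^T *m N *m w) 0 0.
  by rewrite /Bf trmx_mul /N !mulmxA.
have -> : (w^T *m N *m w) 0 0 = \sum_j \sum_i w i 0 * N i j * w j 0.
  rewrite mxE; apply: eq_bigr => j _; rewrite mxE mulr_suml; apply: eq_bigr => i _.
  by rewrite [w^T _ _]mxE.
rewrite mulr_suml; apply: ler_sum => j _; rewrite mulr_suml; apply: ler_sum => i _.
apply: term_bound; rewrite /w coordE /e; exact: CS.
Qed.

Lemma HnormE {R : realType} {d : nat} (H : 'M[R]_d) x : Hnorm H x = Num.sqrt (Bf H x x).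
Proof. by []. Qed.

Lemma BfZZ {R : realType} {d : nat} (H : 'M[R]_d) c x :
  Bf H (c *: x) (c *: x) = c ^+ 2 * Bf H x x.
Proof. by rewrite BfZl BfZr mulrA expr2. Qed.

Lemma Hop_bound {R : realType} {n : nat} (H L : 'M[R]_n.+1) : spd H ->
  forall v, Hnorm H (L *m v) <= Hopnorm H L * Hnorm H v.
Proof.
move=> sH v; have [K hK] := op_bound H L sH.
have hub : has_ubound [set Hnorm H (L *m v) | v in [set v : 'cV[R]_n.+1 | Hnorm H v = 1]].
  exists (Num.sqrt K) => y [x /= hx <-].
  have bx : Bf H x x = 1.
    by rewrite -(sqr_sqrtr (Qge0 H x sH)) -HnormE hx expr1n.
  by rewrite HnormE ler_wsqrtr // -[K]mulr1 -bx hK.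
have [->|nz] := eqVneq v 0.
  by rewrite mulmx0 !HnormE Bf0l sqrtr0 mulr0.
have bpos : 0 < Bf H v v by case: sH => _ /(_ v nz).
set r := Hnorm H v.
have rpos : 0 < r by rewrite /r HnormE sqrtr_gt0.
have h1 : Hnorm H (r^-1 *: v) = 1.
  rewrite HnormE BfZZ sqrtrM ?sqr_ge0 // sqrtr_sqr -HnormE -/r.
  by rewrite ger0_norm ?invr_ge0 ?ltW // mulVf // gt_eqF.
have h2 : Hnorm H (L *m (r^-1 *: v)) <= Hopnorm H L.
  apply: ub_le_sup => //; exists (r^-1 *: v) => //.
move: h2; rewrite -scalemxAr HnormE BfZZ sqrtrM ?sqr_ge0 // sqrtr_sqr -HnormE.
rewrite ger0_norm; last by rewrite invr_ge0 ltW.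
by rewrite ler_pdivrMl // mulrC.
Qed.

Theorem lemma1 (R : realType) (d : nat) (H L : 'M[R]_d) (a : nat -> R)
  (s : nat) (h : R) :
  spd H ->
  L^T *m H + H *m L = 0 ->
  (0 < s)%N ->
  a 0%N = 1 ->
  a s != 0 ->
  0 < h ->
  (forall k : nat, (1 <= k)%N -> (k <= s - 2)%N -> bcoef a s k = 0) ->
  bcoef a s (s - 1) < 0 ->
  h * Hopnorm H L <= Num.sqrt (- bcoef a s (s - 1) / bcoef a s s) ->
  forall u : 'cV[R]_d, Hnorm H (RKop a s h L *m u) <= Hnorm H u.
Proof.
move=> sH sk s0 a0 as0 hp bz bn hb u.
move: H L sH sk hb u; case: d => [|n] H L sH sk hb u.
  by rewrite /Hnorm !mxE !big_ord0.
have HT : H^T = H by case: sH.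
set M := h *: L.
have skM : M^T *m H = - (H *m M).
  rewrite /M linearZ /= -scalemxAl -scalemxAr -scalerN.
  by congr (_ *: _); apply/eqP; rewrite -subr_eq0 opprK sk.
have b0 : bcoef a s 0 = 1.
  by rewrite /bcoef muln0 sub0n max0n min0n big_nat1 a0 expr0 !mulr1.
have bs : bcoef a s s = a s ^+ 2.
  rewrite /bcoef.
  have -> : (2 * s - s = s)%N by lia.
  have -> : minn (2 * s) s = s by apply/minn_idPr; lia.
  rewrite max0n big_nat1.
  have -> : (2 * s - s = s)%N by lia.
  by rewrite exprD sign2 mul1r expr2.
have s1 : s != 1%N.
  apply/eqP => e; move: bn; rewrite {2}e subnn b0 ltr10 //.
have [t st] : exists t, s = t.+2 by exists (s - 2)%N; lia.
subst s.
have e1 : (t.+2 - 1 = t.+1)%N by lia.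
rewrite e1 in bn hb.
rewrite !HnormE; apply: ler_wsqrtr.
rewrite main_identity //.
rewrite big_ord_recr big_ord_recr /= big_ord_recl /= big1 ?addr0; last first.
  move=> i _; rewrite bz ?mul0r //; have := ltn_ord i; rewrite /bump /=; lia.
rewrite b0 expr0 mul1mx mul1r.
set v := M ^+ t.+1 *m u.
have hQ2 : Bf H (M ^+ t.+2 *m u) (M ^+ t.+2 *m u) = h ^+ 2 * Bf H (L *m v) (L *m v).
  by rewrite exprS -mulmxE -mulmxA -/v /M -scalemxAl BfZZ.
rewrite hQ2 -/v.
set b1 := bcoef a t.+2 t.+1 in bn hb *.
set b2 := bcoef a t.+2 t.+2 in bs hb *.
suff : b1 * Bf H v v + b2 * (h ^+ 2 * Bf H (L *m v) (L *m v)) <= 0 by lra.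
have b2pos : 0 < b2 by rewrite bs lt_neqAle sqr_ge0 andbT eq_sym sqrf_eq0.
have [v0|vnz] := eqVneq v 0.
  by rewrite v0 mulmx0 !Bf0l !mulr0 addr0.
have q1pos : 0 < Bf H v v by case: sH => _ /(_ v vnz).
have q2ge0 := Qge0 H (L *m v) sH.
have hop := Hop_bound H L sH v; rewrite !HnormE in hop.
set q1 := Bf H v v in q1pos hop *; set q2 := Bf H (L *m v) (L *m v) in q2ge0 hop *.
set P := Hopnorm H L in hop hb.
have A2 := sqr_sqrtr q2ge0; have B2 := sqr_sqrtr (ltW q1pos).
have Bpos : 0 < Num.sqrt q1 by rewrite sqrtr_gt0.
have Age0 := sqrtr_ge0 q2.
have Pge0 : 0 <= P.
  by rewrite -(pmulr_lge0 _ Bpos) (le_trans Age0 hop).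
have hq : q2 <= P ^+ 2 * q1.
  rewrite -A2 -B2 -exprMn; rewrite ler_pXn2r // ?nnegrE //.
  by rewrite mulr_ge0 // sqrtr_ge0.
set x := - b1 / b2 in hb.
have xge0 : 0 <= x by rewrite /x divr_ge0 // ?(ltW b2pos) //; lra.
have hx : (h * P) ^+ 2 <= x.
  rewrite -(sqr_sqrtr xge0) ler_pXn2r // ?nnegrE ?sqrtr_ge0 //.
  by rewrite mulr_ge0 // ltW.
have xb : x * b2 = - b1 by rewrite /x mulfVK // gt_eqF.
have s1' : h ^+ 2 * q2 <= (h * P) ^+ 2 * q1.
  rewrite exprMn -[_ * P ^+ 2 * q1]mulrA; apply: ler_wpM2l => //; exact: sqr_ge0.
have s2' : (h * P) ^+ 2 * q1 <= x * q1 by rewrite ler_wpM2r // ltW.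
have s3 : b2 * (h ^+ 2 * q2) <= b2 * (x * q1).
  by rewrite ler_wpM2l ?(ltW b2pos) // (le_trans s1' s2').
have : b2 * (x * q1) = - b1 * q1 by rewrite mulrA [b2 * x]mulrC xb.
lra.
Qed.
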